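(* Let $R$ be a local ring with maximal ideal $\mathcal{M}$ such that $\mathcal{M}$ is finitely generated both as a left ideal and as a right ideal. If every left $R$-module generated by two elements is a direct sum of cyclic modules, then either $\mathcal{M}$ is a principal left ideal or $\mathcal{M}$ is a principal right ideal.
   Context: All rings have identity and modules are unital. A ring $R$ is local if it has a unique maximal left ideal $\mathcal{M}$ (which is then the Jacobson radical and a two-sided ideal). *)

(* Defs.v *)
From HB Require Import structures.
From mathcomp Require Import all_boot all_order all_algebra.
Set Implicit Arguments. Unset Strict Implicit. Unset Printing Implicit Defensive.
Import GRing.Theory.
Local Open Scope ring_scope.

Definition left_ideal (R : nzRingType) (I : R -> Prop) : Prop :=
  [/\ I 0, (forall x y, I x -> I y -> I (x + y)) & (forall r x, I x -> I (r * x))].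

Definition maximal_left_ideal (R : nzRingType) (I : R -> Prop) : Prop :=
  [/\ left_ideal I, ~ (forall x, I x) &
      forall J : R -> Prop, left_ideal J -> (forall x, I x -> J x) ->
        (forall x, J x -> I x) \/ (forall x, J x)].

Definition local_with_max (R : nzRingType) (M : R -> Prop) : Prop :=
  maximal_left_ideal M /\
  forall N : R -> Prop, maximal_left_ideal N -> forall x, N x <-> M x.

Definition fg_left_ideal (R : nzRingType) (M : R -> Prop) : Prop :=
  exists (n : nat) (g : 'I_n -> R),
    forall x, M x <-> exists c : 'I_n -> R, x = \sum_(i < n) c i * g i.

Definition fg_right_ideal (R : nzRingType) (M : R -> Prop) : Prop :=
  exists (n : nat) (g : 'I_n -> R),
    forall x, M x <-> exists c : 'I_n -> R, x = \sum_(i < n) g i * c i.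

Definition principal_left_ideal (R : nzRingType) (M : R -> Prop) : Prop :=
  exists g : R, forall x, M x <-> exists r : R, x = r * g.

Definition principal_right_ideal (R : nzRingType) (M : R -> Prop) : Prop :=
  exists g : R, forall x, M x <-> exists r : R, x = g * r.

Definition two_generated (R : nzRingType) (V : lmodType R) : Prop :=
  exists x y : V, forall v : V, exists a b : R, v = a *: x + b *: y.

Definition direct_sum_of_cyclics (R : nzRingType) (V : lmodType R) : Prop :=
  exists (n : nat) (g : 'I_n -> V),
    (forall v : V, exists c : 'I_n -> R, v = \sum_(i < n) c i *: g i) /\
    (forall c d : 'I_n -> R,
        \sum_(i < n) c i *: g i = \sum_(i < n) d i *: g i ->
        forall i, c i *: g i = d i *: g i).

(* Main.v *)
From HB Require Import structures.
Require Import Defs.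
From mathcomp Require Import all_boot all_order all_algebra.
From mathcomp Require Import classical_sets.
From Stdlib Require Import ClassicalEpsilon FunctionalExtensionality PropExtensionality Classical.
Set Implicit Arguments. Unset Strict Implicit. Unset Printing Implicit Defensive.
Import GRing.Theory.
Local Open Scope ring_scope.


Section Local.
Variables (R : nzRingType) (M : R -> Prop) (HM : local_with_max M).

Lemma Mli : left_ideal M. Proof. by case: HM => [[]]. Qed.
Lemma M0 : M 0. Proof. by case: Mli. Qed.
Lemma MD a b : M a -> M b -> M (a + b). Proof. by case: Mli => _ H _; apply: H. Qed.
Lemma MM r a : M a -> M (r * a). Proof. by case: Mli => _ _ H; apply: H. Qed.
Lemma MN a : M a -> M (- a). Proof. by move=> h; rewrite -mulN1r; apply: MM. Qed.
Lemma MB a b : M a -> M b -> M (a - b). Proof. by move=> ha hb; apply: MD => //; apply: MN. Qed.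
Lemma notM1 : ~ M 1.
Proof. case: HM => [[_ H _] _] h; apply: H => z; rewrite -(mulr1 z); exact: MM. Qed.
Lemma Msum n (F : 'I_n -> R) : (forall i, M (F i)) -> M (\sum_(i < n) F i).
Proof. by move=> h; apply: (big_ind M M0 MD) => i _; apply: h. Qed.

Lemma max_contains (L : R -> Prop) : left_ideal L -> ~ L 1 -> forall z, L z -> M z.
Proof.
move=> [L0 LD LM] L1.
pose P : set (set R) := fun X => (forall t, ~ X t) \/
   (left_ideal X /\ (forall t, L t -> X t) /\ ~ X 1).
have [A [PA Amax]] : exists A, P A /\ forall B, (A `<` B)%classic -> ~ P B.
  apply: Zorn_bigcup => F FP Ftot.
  case: (classic (exists X, F X /\ exists t, X t)) => [[X0 [FX0 [t0 X0t0]]]|Hn]; last first.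
    left=> t [X FX Xt]; apply: Hn; by exists X; split => //; exists t.
  have memI X t : F X -> X t -> left_ideal X /\ (forall t, L t -> X t) /\ ~ X 1.
    move=> FX Xt; case: (FP X FX) => //; by move=> /(_ t).
  right; split; [split|split].
  - exists X0 => //; by case: (memI _ _ FX0 X0t0) => [[]].
  - move=> a b [X FX Xa] [Y FY Yb].
    case: (Ftot X Y FX FY) => sub.
    + exists Y => //; case: (memI _ _ FY Yb) => [[_ D _] _]; apply: D => //; exact: sub.
    + exists X => //; case: (memI _ _ FX Xa) => [[_ D _] _]; apply: D => //; exact: sub.
  - move=> r a [X FX Xa]; exists X => //; case: (memI _ _ FX Xa) => [[_ _ H] _]; exact: H.
  - move=> t Lt; exists X0 => //; case: (memI _ _ FX0 X0t0) => _ [H _]; exact: H.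
  - move=> [X FX X1]; case: (memI _ _ FX X1) => _ [_]; exact.
have [Ali [LA A1]] : left_ideal A /\ (forall t, L t -> A t) /\ ~ A 1.
  case: PA => // Aempty; exfalso; apply: (Amax L); last first.
    by right; split => //; split.
  split; first by move=> t /Aempty.
  by move=> h; apply: (Aempty 0); apply: h.
have Amaxl : maximal_left_ideal A.
  split; [exact: Ali|by move=> h; exact: (A1 (h 1))|].
  move=> J Jli AJ; case: (classic (J 1)) => [J1|nJ1].
    right => t; rewrite -(mulr1 t); by case: Jli => _ _ H; apply: H.
  left => t Jt; apply: NNPP => nAt; apply: (Amax J).
    split => // h; apply: nAt; exact: h.
  by right; split => //; split => // s Ls; apply: AJ; apply: LA.
case: HM => _ U z Lz; apply/(U A Amaxl); exact: LA.
Qed.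

Lemma left_inv_1m m : M m -> exists v, v * (1 - m) = 1.
Proof.
move=> Mm; pose L := fun z => exists r, z = r * (1 - m).
have Lli : left_ideal L.
  split; first by exists 0; rewrite mul0r.
    by move=> a b [r ->] [s ->]; exists (r + s); rewrite mulrDl.
  by move=> r a [s ->]; exists (r * s); rewrite mulrA.
case: (classic (L 1)) => [[v hv]|nL1]; first by exists v.
exfalso; apply: notM1; have h := max_contains Lli nL1 (ex_intro _ 1 (esym (mul1r _))).
by have := MD h Mm; rewrite subrK.
Qed.

Lemma left_inv z : ~ M z -> exists u, u * z = 1.
Proof.
move=> nMz; pose J := fun w => exists r m, M m /\ w = r * z + m.
have Jli : left_ideal J.
  split; first by exists 0, 0; split; [exact: M0|rewrite mul0r addr0].
    move=> a b [r [m [Mm ->]]] [s [n [Mn ->]]]; exists (r + s), (m + n); split; first exact: MD.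
    by rewrite mulrDl addrACA.
  move=> t a [r [m [Mm ->]]]; exists (t * r), (t * m); split; first exact: MM.
  by rewrite mulrDr mulrA.
case: HM => [[_ _ Mmax] _].
case: (Mmax J Jli).
- by move=> t Mt; exists 0, t; split => //; rewrite mul0r add0r.
- move=> h; exfalso; apply: nMz; apply: h; exists 1, 0; split; [exact: M0|by rewrite mul1r addr0].
- move=> /(_ 1) [r [m [Mm e]]].
  have [v hv] := left_inv_1m Mm.
  exists (v * r); rewrite -mulrA; have -> : r * z = 1 - m by rewrite e addrK.
  exact: hv.
Qed.

Lemma unitM z : ~ M z -> exists u, u * z = 1 /\ z * u = 1.
Proof.
move=> nMz; have [u hu] := left_inv nMz; exists u; split => //.
case: (classic (M u)) => [Mu|nMu].
  have [w hw] := left_inv_1m (MM z Mu).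
  have : w * (1 - z * u) * z = z by rewrite hw mul1r.
  rewrite -mulrA mulrBl mul1r -mulrA hu mulr1 subrr mulr0 => ez.
  by exfalso; apply: nMz; rewrite -ez; exact: M0.
have [v hv] := left_inv nMu.
have : v = z by rewrite -[v]mulr1 -hu mulrA hv mul1r.
by move=> <-.
Qed.

Lemma M_rightmul m r : M m -> M (m * r).
Proof.
move=> Mm; apply: NNPP => nM; have [u [h1 h2]] := unitM nM.
case: (classic (M (r * u))) => [Mru|nMru].
  by apply: notM1; rewrite -h2 -mulrA; apply: MM.
have [w [w1 w2]] := unitM nMru.
have ew : w = m by rewrite -[m]mulr1 -w2 !mulrA h2 mul1r.
apply: notM1; rewrite -w2 ew; exact: MM.
Qed.

End Local.


Section Quot.
Variables (R : nzRingType) (x y : R).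

Definition qrel (v w : R * R) : Prop := exists r, v.1 - w.1 = r * x /\ v.2 - w.2 = r * y.

Lemma rel_refl v : qrel v v.
Proof. by exists 0; rewrite !subrr !mul0r. Qed.
Lemma rel_sym v w : qrel v w -> qrel w v.
Proof. by move=> [r [h1 h2]]; exists (- r); rewrite !mulNr -h1 -h2 !opprB. Qed.
Lemma rel_trans u v w : qrel u v -> qrel v w -> qrel u w.
Proof.
move=> [r [h1 h2]] [s [k1 k2]]; exists (r + s); rewrite !mulrDl -h1 -h2 -k1 -k2.
by rewrite !addrA !subrK.
Qed.

Definition rep (v : R * R) : R * R := epsilon (inhabits (0 : R, 0 : R)) (qrel v).

Lemma rep_rel v : qrel v (rep v).
Proof. rewrite /rep; apply: (epsilon_spec (inhabits (0 : R, 0 : R)) (qrel v)); exists v; exact: rel_refl. Qed.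

Lemma rep_eq v w : qrel v w -> rep v = rep w.
Proof.
move=> h; rewrite /rep; suff -> : qrel v = qrel w by [].
apply: functional_extensionality => t; apply: propositional_extensionality; split.
  by move=> h'; apply: rel_trans (rel_sym h) h'.
by move=> h'; apply: rel_trans h h'.
Qed.

Record Q := MkQ { qv : R * R; qP : rep qv == qv }.
HB.instance Definition _ := [isSub for qv].
HB.instance Definition _ := [Choice of Q by <:].

Lemma rep_idem v : rep (rep v) == rep v.
Proof. by apply/eqP; apply: rep_eq; apply: rel_sym; apply: rep_rel. Qed.

Definition mk v : Q := MkQ (rep_idem v).

Lemma mkE v w : mk v = mk w <-> qrel v w.
Proof.
split.
  move=> /(congr1 qv) /= e; apply: rel_trans (rep_rel v) _; rewrite e.
  exact: rel_sym (rep_rel w).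
by move=> h; apply: val_inj => /=; apply: rep_eq.
Qed.

Lemma mk_qv q : mk (qv q) = q.
Proof. by apply: val_inj => /=; apply/eqP; apply: qP. Qed.

Lemma mk_rep v : mk (rep v) = mk v.
Proof. by apply/mkE; apply: rel_sym; apply: rep_rel. Qed.

Definition addv (v w : R * R) := (v.1 + w.1, v.2 + w.2).
Definition oppv (v : R * R) := (- v.1, - v.2).
Definition sclv (r : R) (v : R * R) := (r * v.1, r * v.2).

Lemma rel_add v v' w w' : qrel v v' -> qrel w w' -> qrel (addv v w) (addv v' w').
Proof.
move=> [r [h1 h2]] [s [k1 k2]]; exists (r + s); rewrite !mulrDl -h1 -h2 -k1 -k2 /=.
by split; rewrite opprD addrACA.
Qed.
Lemma rel_opp v v' : qrel v v' -> qrel (oppv v) (oppv v').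
Proof. by move=> [r [h1 h2]]; exists (- r); rewrite !mulNr -h1 -h2 /=; split; rewrite opprK opprB addrC. Qed.
Lemma rel_scl a v v' : qrel v v' -> qrel (sclv a v) (sclv a v').
Proof. by move=> [r [h1 h2]]; exists (a * r); rewrite -!mulrA -h1 -h2 /=; split; rewrite mulrBr. Qed.

Definition addQ (p q : Q) := mk (addv (qv p) (qv q)).
Definition oppQ (p : Q) := mk (oppv (qv p)).
Definition zeroQ := mk (0, 0).
Definition sclQ (a : R) (p : Q) := mk (sclv a (qv p)).

Lemma addQ_mk v w : addQ (mk v) (mk w) = mk (addv v w).
Proof. by apply/mkE; apply: rel_add; apply: rel_sym; apply: rep_rel. Qed.
Lemma oppQ_mk v : oppQ (mk v) = mk (oppv v).
Proof. by apply/mkE; apply: rel_opp; apply: rel_sym; apply: rep_rel. Qed.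
Lemma sclQ_mk a v : sclQ a (mk v) = mk (sclv a v).
Proof. by apply/mkE; apply: rel_scl; apply: rel_sym; apply: rep_rel. Qed.

Lemma addQA : associative addQ.
Proof.
move=> p q r; rewrite -[p]mk_qv -[q]mk_qv -[r]mk_qv !addQ_mk.
by rewrite /addv /= !addrA.
Qed.
Lemma addQC : commutative addQ.
Proof. by move=> p q; rewrite /addQ /addv; congr (mk (_, _)); apply: addrC. Qed.
Lemma add0Q : left_id zeroQ addQ.
Proof. by move=> p; rewrite -[p]mk_qv; case: (qv p) => a b; rewrite /zeroQ addQ_mk /addv /= !add0r. Qed.
Lemma addNQ : left_inverse zeroQ oppQ addQ.
Proof. by move=> p; rewrite -[p]mk_qv; case: (qv p) => a b; rewrite oppQ_mk addQ_mk /addv /= !addNr. Qed.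

HB.instance Definition _ := GRing.isZmodule.Build Q addQA addQC add0Q addNQ.

Lemma sclQA a b p : sclQ a (sclQ b p) = sclQ (a * b) p.
Proof. by rewrite -[p]mk_qv !sclQ_mk /sclv /= !mulrA. Qed.
Lemma sclQ1 : left_id 1 sclQ.
Proof. by move=> p; rewrite -[p]mk_qv; case: (qv p) => a b; rewrite !sclQ_mk /sclv /= !mul1r. Qed.
Lemma sclQDr : right_distributive sclQ +%R.
Proof.
move=> a p q; change (sclQ a (addQ p q) = addQ (sclQ a p) (sclQ a q)).
rewrite -[p]mk_qv -[q]mk_qv addQ_mk !sclQ_mk addQ_mk.
by rewrite /sclv /addv /= !mulrDr.
Qed.
Lemma sclQDl p : {morph sclQ^~ p: a b / a + b}.
Proof.
move=> a b; change (sclQ (a + b) p = addQ (sclQ a p) (sclQ b p)).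
rewrite -[p]mk_qv !sclQ_mk addQ_mk.
by rewrite /sclv /addv /= !mulrDl.
Qed.

HB.instance Definition _ := GRing.Zmodule_isLmodule.Build R Q sclQA sclQ1 sclQDr sclQDl.

Lemma mkD v w : mk v + mk w = mk (addv v w).
Proof. exact: addQ_mk. Qed.
Lemma mkZ a v : a *: mk v = mk (sclv a v).
Proof. exact: sclQ_mk. Qed.
Lemma mkB v w : mk v - mk w = mk (v.1 - w.1, v.2 - w.2).
Proof.
have -> : - mk w = mk (oppv w) by exact: oppQ_mk.
exact: addQ_mk.
Qed.
Lemma mk0 : mk (0, 0) = 0.
Proof. by []. Qed.
Lemma mk_eq0 v : mk v = 0 <-> exists r, v.1 = r * x /\ v.2 = r * y.
Proof. by rewrite -mk0 mkE /qrel /= !subr0. Qed.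
Lemma mk_sum n (F : 'I_n -> R * R) :
  \sum_(i < n) mk (F i) = mk (\sum_(i < n) (F i).1, \sum_(i < n) (F i).2).
Proof.
elim: n F => [|n IH] F; first by rewrite !big_ord0.
by rewrite !big_ord_recr /= IH mkD.
Qed.

End Quot.

Lemma Q2gen (R : nzRingType) (x y : R) : two_generated (Q x y).
Proof.
exists (mk x y (1, 0)), (mk x y (0, 1)) => v; exists (qv v).1, (qv v).2.
by rewrite !mkZ mkD /sclv /addv /= !mulr1 !mulr0 addr0 add0r -surjective_pairing mk_qv.
Qed.


Lemma cmpM (R : nzRingType) (M : R -> Prop) (HM : local_with_max M)
  (Hyp : forall V : lmodType R, two_generated V -> direct_sum_of_cyclics V)
  (x y : R) : M x -> M y -> (exists z, y = x * z) \/ (exists z, x = y * z).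
Proof.
move=> Mx My.
have [n [G [Gspan Gind]]] := Hyp _ (Q2gen x y).
pose a i := (qv (G i)).1; pose b i := (qv (G i)).2.
have GE i : G i = mk x y (a i, b i) by rewrite -surjective_pairing mk_qv.
have ZG (lam : R) i : lam *: G i = mk x y (lam * a i, lam * b i) by rewrite GE mkZ.
have [c ec] := Gspan (mk x y (1, 0)).
have [d ed] := Gspan (mk x y (0, 1)).
have [i Mai] : exists i, ~ M (a i).
  apply: NNPP => hn.
  have hall : forall i, M (c i * a i).
    by move=> j; apply: (MM HM); apply: NNPP => h; apply: hn; exists j.
  move: ec; under eq_bigr do rewrite ZG; rewrite mk_sum /= => /mkE [t [h1 _]].
  apply: (notM1 HM); rewrite -(subrK (\sum_(j < n) c j * a j) 1) h1.
  apply: (MD HM); [exact: MM | exact: Msum].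
have [u [ua au]] := unitM HM Mai.
set aa := a i in ua au; set bb := b i; set dd := d i.
have [be ebe] : exists be, be = y - x * u * bb by eexists.
have [ga ega] : exists ga, ga = x * u + be * dd by eexists.
have hx : x = ga * aa - be * dd * aa.
  by rewrite ega mulrDl addrK -mulrA ua mulr1.
have hy : y = ga * bb + be - be * dd * bb.
  by rewrite ega mulrDl addrAC addrK ebe addrC subrK.
pose c' j := if j == i then ga else be * d j.
have S0 : \sum_(j < n) c' j *: G j = 0.
  rewrite (bigD1 i) //= /c' eqxx.
  under eq_bigr => j /negbTE hj do rewrite hj -scalerA.
  rewrite -scaler_sumr.
  have ed' := ed; rewrite (bigD1 i) //= in ed'.
  have -> : \sum_(j < n | j != i) d j *: G j = mk x y (0, 1) - dd *: G i.
    by rewrite ed' addrC addrK.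
  rewrite scalerBr scalerA !ZG mkZ mkB mkD; apply/mk_eq0; exists 1.
  rewrite /= !mul1r mulr0 sub0r mulr1; split; first by rewrite hx.
  by rewrite hy addrA.
have := Gind c' (fun _ => 0).
rewrite S0 big1; last by move=> j _; rewrite scale0r.
move=> /(_ erefl i); rewrite /c' eqxx scale0r ZG => /mk_eq0 [r [hr1 hr2]].
simpl in hr1, hr2.
have hx' : x = ga * aa - be * (dd * aa) by rewrite mulrA.
have h0 : (r * ga - r * be * dd - ga) * aa = 0.
  by rewrite !mulrBl -!mulrA -mulrBr -hx' hr1 subrr.
have hd : r * ga - r * be * dd = ga.
  apply/eqP; rewrite -subr_eq0; apply/eqP.
  by rewrite -[_ - ga]mulr1 -au mulrA h0 mul0r.
have hry : r * y = (r * ga - r * be * dd) * bb + r * be.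
  by rewrite hy mulrBr mulrDr mulrBl !mulrA addrAC.
rewrite hd -hr2 in hry.
have rbe : r * be = 0.
  by apply: (@addrI _ (ga * bb)); rewrite addr0 -hry.
have hrg : r * ga = ga by rewrite -[RHS]hd rbe mul0r subr0.
have hyb : y = be + x * u * bb by rewrite ebe subrK.
case: (classic (M r)) => Mr; last first.
  have [v [v1 _]] := unitM HM Mr.
  have be0 : be = 0 by rewrite -[be]mul1r -v1 -mulrA rbe mulr0.
  by left; exists (u * bb); rewrite hyb be0 add0r mulrA.
have n1r : ~ M (1 - r).
  by move=> h; apply: (notM1 HM); rewrite -(subrK r 1); apply: (MD HM).
have [w [w1 _]] := unitM HM n1r.
have ga0 : ga = 0.
  by rewrite -[ga]mul1r -w1 -mulrA mulrBl mul1r hrg subrr mulr0.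
rewrite ga0 mul0r sub0r in hx; rewrite ga0 mul0r add0r in hy.
case: (classic (M (1 - dd * bb))) => Mdb.
  have ndb : ~ M (dd * bb).
    by move=> h; apply: (notM1 HM); rewrite -(subrK (dd * bb) 1); apply: (MD HM).
  have [w' [_ w'2]] := unitM HM ndb.
  have hbd : be * dd = - (x * u) by rewrite hx mulNr opprK -!mulrA au mulr1.
  have hbe : be = - (x * u * bb * w').
    by rewrite -[be]mulr1 -w'2 !mulrA hbd !mulNr.
  left; exists (u * bb - u * bb * w').
  by rewrite hyb hbe addrC mulrBr !mulrA.
have [w' [_ w'2]] := unitM HM Mdb.
have hbe : be = y * w'.
  by rewrite -[be]mulr1 -w'2 mulrA hy mulrBr mulr1 mulrA.
right; exists (- (w' * dd * aa)).
by rewrite hx hbe mulrN !mulrA.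
Qed.


Theorem theorem2p4 (R : nzRingType) (M : R -> Prop) :
  local_with_max M ->
  fg_left_ideal M ->
  fg_right_ideal M ->
  (forall V : lmodType R, two_generated V -> direct_sum_of_cyclics V) ->
  principal_left_ideal M \/ principal_right_ideal M.
Proof.
move=> HM _ [n [g Hg]] Hyp; right.
have Mg i : M (g i).
  apply/Hg; exists (fun j => if j == i then 1 else 0).
  rewrite (bigD1 i) //= eqxx mulr1 big1 ?addr0 // => j /negbTE ->; exact: mulr0.
have key : forall k, (k <= n)%N -> exists g0, M g0 /\
    forall i : 'I_n, (i < k)%N -> exists z, g i = g0 * z.
  elim=> [|k IH] hk; first by exists 0; split; [exact: (M0 HM)|].  
  have [g0 [Mg0 H0]] := IH (ltnW hk).
  pose j : 'I_n := Ordinal hk.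
  case: (@cmpM R M HM Hyp _ _ Mg0 (Mg j)) => [[z hz]|[z hz]].
    exists g0; split => // i; rewrite ltnS leq_eqVlt => /orP [/eqP ei|lt].
      by exists z; rewrite -hz; congr g; apply: val_inj.
    exact: H0.
  exists (g j); split => // i; rewrite ltnS leq_eqVlt => /orP [/eqP ei|lt].
    by exists 1; rewrite mulr1; congr g; apply: val_inj.
  have [z' hz'] := H0 i lt; exists (z * z'); by rewrite hz' hz mulrA.
have [g0 [Mg0 H0]] := key n (leqnn n).
exists g0 => t; split.
  move=> /Hg [c ->]; apply: (big_ind (fun s => exists r, s = g0 * r)).
  - by exists 0; rewrite mulr0.
  - by move=> s1 s2 [r1 ->] [r2 ->]; exists (r1 + r2); rewrite mulrDr.
  - move=> i _; have [z ->] := H0 i (ltn_ord i); exists (z * c i); by rewrite mulrA.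
by move=> [r ->]; apply: M_rightmul.
Qed.
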